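(* Let $(G,c)\in P_m$ with $G$ connected, and choose a face $f$ of $G$ to be the outer face (so $G$ is viewed as a plane graph). Let $B$ and $W$ denote respectively the number of black and white faces of $G$ other than $f$. Then: - if $f$ is white, $B-W\le \lfloor \frac{m-1}{2}\rfloor$; - if $f$ is black, $B-W\le \lfloor \frac{m-5}{2}\rfloor$.
   Context: $P_m$ is the set of pairs $(G,c)$ where $G$ is a simple graph on $m$ vertices with no isolated vertices, embedded in the $2$-sphere, and $c$ is a coloring of the faces of $G$ in black and white such that every edge bounds exactly one white face and exactly one black face. *)

(* Defs.v *)
(* Graphs embedded in the 2-sphere are encoded
   combinatorially as (connected) combinatorial maps of genus 0. *)
From HB Require Import structures.
From mathcomp Require Import all_boot all_order all_algebra all_fingroup.
Set Implicit Arguments. Unset Strict Implicit. Unset Printing Implicit Defensive.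

Section Maps.
Variable D : finType.   (* darts = half-edges *)

Definition edge_involution (a : {perm D}) : Prop :=
  forall d, a (a d) = d /\ a d != d.

(* vertices = orbits of the rotation s, edges = orbits of a,
   faces = orbits of the face permutation phi d = s (a d) *)
Definition face_perm (s a : {perm D}) : D -> D := fun d => s (a d).

Definition nverts (s : {perm D}) : nat := fcard s D.
Definition nedges (a : {perm D}) : nat := fcard a D.
Definition nfaces (s a : {perm D}) : nat := fcard (face_perm s a) D.

Definition map_connected (s a : {perm D}) : Prop :=
  forall x y, connect [rel u v | (v == s u) || (v == a u)] x y.

(* embedded in the sphere: Euler characteristic 2 *)
Definition genus0 (s a : {perm D}) : Prop :=
  nverts s + nfaces s a = nedges a + 2.

(* simple graph: no loops, no multiple edges *)
Definition simple_map (s a : {perm D}) : Prop :=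
  (forall d, ~~ fconnect s d (a d)) /\
  (forall d e, fconnect s d e -> fconnect s (a d) (a e) -> d = e).

(* c d = true : the face containing dart d is black; false : white.
   c is constant on faces, and the two sides of each edge get
   different colours (each edge bounds exactly one white and one black face). *)
Definition face_colouring (s a : {perm D}) (c : D -> bool) : Prop :=
  (forall d, c (face_perm s a d) = c d) /\ (forall d, c (a d) != c d).

(* number of black / white faces other than the outer face (face of d0) *)
Definition nblack_inner (s a : {perm D}) (c : D -> bool) (d0 : D) : nat :=
  fcard (face_perm s a) [pred d | c d && ~~ fconnect (face_perm s a) d0 d].
Definition nwhite_inner (s a : {perm D}) (c : D -> bool) (d0 : D) : nat :=
  fcard (face_perm s a) [pred d | ~~ c d && ~~ fconnect (face_perm s a) d0 d].

End Maps.

(* floor((n - k)/2) as an integer (intdiv's %/ floors for positive divisors) *)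
Definition floor_half_sub (n k : nat) : int := ((n%:Z - k%:Z) %/ 2)%Z.

(* Main.v *)
Require Import Defs.
From HB Require Import structures.
From mathcomp Require Import all_boot all_order all_algebra all_fingroup.
From mathcomp Require Import zify.
Import Order.TTheory GRing.Theory Num.Theory.
Set Implicit Arguments. Unset Strict Implicit. Unset Printing Implicit Defensive.

Lemma fcard_order_ge (T : finType) (f : T -> T) (injf : injective f) n (a : {pred T}) :
  (forall x, x \in a -> n <= fingraph.order f x) -> fclosed f a -> fcard f a * n <= #|a|.
Proof.
have symf := fconnect_sym injf.
move=> a_n cl_a; rewrite /n_comp_mem; set b := [predI froots f & a].
suff H: #|b| * n <= #|preim (froot f) b|.
  apply: (leq_trans H); apply/eq_leq; apply: eq_card => x; rewrite !inE (roots_root symf).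
  exact/esym/(closed_connect cl_a)/connect_root.
have{cl_a a_n} (x): b x -> froot f x = x /\ n <= fingraph.order f x.
  by case/andP=> /eqP-> /a_n.
clearbody b; clear a; move=> f_b0.
have : #|b| == #|b| by []; move: {2}#|b| => k.
elim: k b f_b0 => [|m IHm] b f_b def_m.
  by rewrite (eqP def_m) mul0n.
have [x b_x | b0] := pickP b; last by rewrite (eq_card0 b0) in def_m.
have [r_x ox_n] := f_b x b_x; rewrite (cardD1 x) [x \in b]b_x eqSS in def_m.
have -> : #|b| = #|[predD1 b & x]|.+1 by rewrite (cardD1 x) [x \in b]b_x.
rewrite mulSn -(cardID (fconnect f x) (preim (froot f) b)); apply: leq_add.
  apply: (leq_trans ox_n); apply/eq_leq; apply: eq_card => y.
  rewrite !inE /=; apply/esym/andb_idl => /= fxy; rewrite /in_mem /= -(fingraph.rootP symf fxy) r_x //.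
apply: leq_trans (IHm _ _ def_m) _ => [z /andP[_ /f_b //]|].
apply/eq_leq; apply: eq_card => y.
by rewrite !inE; congr (~~ _ && _); rewrite /= /in_mem /= symf -(fingraph.root_connect symf) r_x.
Qed.

Lemma fcard_split (T : finType) (f : T -> T) (P Q : {pred T}) :
  fcard f P = fcard f [pred d | P d && Q d] + fcard f [pred d | P d && ~~ Q d].
Proof.
rewrite /n_comp_mem; set A := predI _ _.
rewrite -(cardID Q A); congr (_ + _); apply: eq_card => x;
  rewrite !inE /= !unfold_in /=; by case: (froots f x); case: (P x); case: (Q x).
Qed.

Lemma main_facts (D : finType) (s a : {perm D}) (c : D -> bool) (d0 : D) :
  edge_involution a -> simple_map s a -> face_colouring s a c ->
  let phi := face_perm s a in
  [/\ nfaces s a = fcard phi [pred d | c d] + fcard phi [pred d | ~~ c d],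
      nedges a * 2 = #|D|,
      #|[pred d | c d]| = #|[pred d | ~~ c d]|,
      fcard phi [pred d | c d] * 3 <= #|[pred d | c d]| &
      0 < fcard phi [pred d | ~~ c d] /\
      (nblack_inner s a c d0 + c d0 = fcard phi [pred d | c d] /\
       nwhite_inner s a c d0 + ~~ c d0 = fcard phi [pred d | ~~ c d])].
Proof.
move=> Ha [Hs1 Hs2] [Hcf Hca] phi.
have injphi : injective phi by move=> x y /perm_inj/perm_inj.
have clB : fclosed phi [pred d | c d].
  by move=> x y /eqP <-; rewrite /= /in_mem /= Hcf.
have clW : fclosed phi [pred d | ~~ c d].
  by move=> x y /eqP <-; rewrite /= /in_mem /= Hcf.
have symphi := fconnect_sym injphi.
have Hnot : forall d, phi (phi d) != d.
  move=> d; apply/negP => /eqP H.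
  have He : a d = phi d.
    apply: Hs2.
      by apply/connect1/eqP.
    rewrite (Ha d).1 (fconnect_sym (@perm_inj _ s)); apply/connect1/eqP; exact H.
  have Hsd : s (a d) = a d by rewrite [RHS]He.
  have := Hcf (a (a d)); rewrite /face_perm (Ha (a d)).1 Hsd (Ha d).1 => Hc.
  by move: (Hca d); rewrite -Hc eqxx.
split.
- rewrite /nfaces -/phi (n_compC [pred d | c d]); congr (_ + _).
- have -> : #|D| = #|(predT : {pred D})| by apply: eq_card.
  apply: fcard_order_set; first exact: perm_inj.
    apply/subsetP => x _; rewrite inE; apply/eqP.
    have -> : 2 = size [:: x; a x] by [].
    apply: order_cycle; last by rewrite inE eqxx.
      by rewrite /= !eqxx (Ha x).1 eqxx.
    by rewrite /= inE andbT eq_sym (Ha x).2.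
  by [].
- have -> : #|[pred d | c d]| = #|[preim a of [pred d | ~~ c d]]|.
    apply: eq_card => x; rewrite !inE /=.
    by move: (Hca x); case: (c x); case: (c (a x)).
  rewrite (card_preim (@perm_inj _ a)).
  apply: eq_card => x; rewrite !inE.
  have -> : x \in codom a by rewrite -{1}(Ha x).1 codom_f.
  by [].
- apply: fcard_order_ge => // x _.
  move: (fingraph.order_gt0 phi x) (iter_order injphi x).
  case: (fingraph.order phi x) => [|[|[|k]]] //= _.
    by move=> h; move: (Hnot x); rewrite h h eqxx.
  by move=> h; move: (Hnot x); rewrite h eqxx.
split.
- apply/(fcard_gt0P injphi clW).
  case Hd : (c d0); last by exists d0; rewrite inE Hd.
  by exists (a d0); rewrite inE; move: (Hca d0); rewrite Hd; case: (c (a d0)).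
have Hconn : forall P : {pred D}, fclosed phi P ->
   fcard phi [pred d | P d && fconnect phi d0 d] = (d0 \in P).
  move=> P clP; case HP : (d0 \in P).
    transitivity 1%N => //; rewrite -(n_comp_connect symphi d0); apply: eq_n_comp_r => x; rewrite !inE.
    apply/andb_idl => hx; by rewrite -[P x]/(x \in P) -(closed_connect clP hx).
  apply: eq_card0 => x; rewrite !inE; apply/negP => /and3P[_ h1 h2].
  by move: h1; rewrite -[P x]/(x \in P) -(closed_connect clP h2) HP.
split.
  rewrite (fcard_split _ _ (fconnect phi d0)) (Hconn _ clB) addnC.
  by rewrite /nblack_inner.
rewrite (fcard_split _ _ (fconnect phi d0)) (Hconn _ clW) addnC.
by rewrite /nwhite_inner.
Qed.

Theorem lemma2p4 (D : finType) (s a : {perm D}) (c : D -> bool) (m : nat) (d0 : D) :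
  edge_involution a -> map_connected s a -> genus0 s a -> simple_map s a ->
  nverts s = m -> face_colouring s a c ->
  (c d0 = false ->
     ((nblack_inner s a c d0)%:Z - (nwhite_inner s a c d0)%:Z <= floor_half_sub m 1)%R) /\
  (c d0 = true ->
     ((nblack_inner s a c d0)%:Z - (nwhite_inner s a c d0)%:Z <= floor_half_sub m 5)%R).
Proof.
move=> Ha _ Heul Hsimp Hm Hcol.
have [Hf He Hbw Hb3 [Hw1 [HB HW]]] := main_facts d0 Ha Hsimp Hcol.
move: Heul; rewrite /genus0 Hm Hf => Heul.
have HD := cardC [pred d | c d].
have HD' : #|[predC [pred d | c d]]| = #|[pred d | ~~ c d]| by apply: eq_card.
move: HD; rewrite HD' => HD.
split=> Hc; rewrite Hc /= in HB HW; rewrite /floor_half_sub lez_divRL //.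
all: set nb := fcard _ [pred d | c d] in Hf Hb3 Heul HB; set nw := fcard _ [pred d | ~~ c d] in Hf Hw1 Heul HW; set bk := #|[pred d | c d]| in Hbw Hb3 HD; lia.
Qed.
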